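(* Let $h$ be sufficiently small and $T$ an interface element (curve or line variant). For arbitrary points $\overline X_i\in l$, $i\in\mathcal I$, define for $s=\pm$ and $X\in T_p^s$ $$\boldsymbol\Lambda_s(X)=\sum_{i\in\mathcal I}(M_i-X)\phi^s_{i,T}(X)+\sum_{i\in\mathcal I^{s'}}(\overline M^s(F)-I)^T(M_i-\overline X_i)\phi^s_{i,T}(X)+\sum_{i\in\mathcal I^{int}}\frac1{|b_i|}\int_{b_i\cap T^{s'}}(\overline M^s(F)-I)^T(P-\overline X_i)\,ds(P)\,\phi^s_{i,T}(X),$$ and $\boldsymbol\Lambda=\boldsymbol\Lambda_+$ on $T_p^+$, $\boldsymbol\Lambda=(\overline M^+(F))^T\boldsymbol\Lambda_-$ on $T_p^-$. Then $\boldsymbol\Lambda\in[S_h^{int}(T)]^2$ and $\int_{b_i}\boldsymbol\Lambda\,ds=\mathbf 0$ for every $i\in\mathcal I$.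
   Context: Standard setting. $\Omega\subset\mathbb R^2$ is a bounded domain that is a finite union of rectangles, separated by a curve $\Gamma$ into open subdomains $\Omega^+,\Omega^-$ with $\overline\Omega=\overline{\Omega^+}\cup\overline{\Omega^-}\cup\Gamma$; $\beta^\pm>0$ are constants and $\rho=\beta^-/\beta^+$. $\mathcal T_h$ is a Cartesian mesh of $\Omega$ made either of rectangles or of triangles (Cartesian rectangles cut along a diagonal), with maximal edge length $h$. An element $T$ is an interface element if its interior meets $\Gamma$. The mesh satisfies: (H1) $\Gamma$ does not intersect an edge of any element at more than two points unless the edge is part of $\Gamma$; (H2) if $\Gamma$ meets the boundary of an element at two points, they lie on different edges; (H3) $\Gamma$ is piecewise $C^2$ and $\Gamma\cap T$ is $C^2$ for every interface element $T$; (H4) $PC^2_{int}(T)$ is dense in $PH^2_{int}(T)$ for every interface element $T$. On an interface element $T$, $D,E$ are the two points of $\Gamma\cap\partial T$, $l$ is the segment $DE$, $\bar{\mathbf n}=(\bar n_x,\bar n_y)^T$ is a unit normal to $l$, and $T^\pm=T\cap\Omega^\pm$. IFE setting. Let $T$ be an interface element with edges $b_i$, $i\in\mathcal I=\{1,\dots,N\}$ ($N=3$ for triangles, $N=4$ for rectangles) and midpoints $M_i$ of $b_i$. $\Pi_T=\mathrm{span}\{1,x,y\}$ (Crouzeix–Raviart, triangles) or $\Pi_T=\mathrm{span}\{1,x,y,x^2-y^2\}$ (rotated-$Q_1$, rectangles). Set $\mathcal I^s=\{i:b_i\subseteq\overline{T^s}\}$, $\mathcal I^{int}=\{i: b_i\cap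 T^+\ne\emptyset\text{ and }b_i\cap T^-\ne\emptyset\}$ ($s=\pm$); $s'$ denotes the sign opposite to $s$. One of two variants is fixed: (curve) a point $F\in\Gamma\cap T$, $F\neq D,E$, $\mathbf v(F)=\mathbf n(F)$ the unit normal to $\Gamma$ at $F$ oriented so that $\bar{\mathbf n}\cdot\mathbf n(F)>0$, and $T_p^\pm=T^\pm$; (line) a point $F\in l$, $\mathbf v(F)=\bar{\mathbf n}$, and $T_p^\pm$ are the two parts into which $l$ cuts $T$, $T_p^s$ being the one on the same side of $l$ as $\partial T\cap \overline{T^s}$. An IFE function on $T$ is a function $\phi_T$ with $\phi_T|_{T_p^s}=\phi_T^s$, $\phi_T^s\in\Pi_T$ ($s=\pm$), satisfying (J1) $\phi_T^-=\phi_T^+$ on $l$, and additionally $\partial_{xx}\phi_T^-=\partial_{xx}\phi_T^+$ in the rotated-$Q_1$ case; (J2) $\beta^-\nabla\phi_T^-(F)\cdot\mathbf v(F)=\beta^+\nabla\phi_T^+(F)\cdot\mathbf v(F)$. $S_h^{int}(T)$ denotes the linear space of IFE functions on $T$, and $\phi_{i,T}$, $i\in\mathcal I$, are the IFE functions with $\frac1{|b_j|}\int_{b_j}\phi_{i,T}\,ds=\delta_{ij}$ (they exist and are unique for $h$ small enough); $\phi^s_{i,T}\in\Pi_T$ is the polynomial piece of $\phi_{i,T}$ on $T^s_p$, regarded as a polynomial on all of $\mathbb R^2$. With $\mathbf v(F)=(v_x,v_y)^T$ and $r_s=\beta^s/\beta^{s'}$, $$\overline M^s(F)=\frac{1}{\bar{\mathbf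 n}\cdot\mathbf v(F)}\begin{pmatrix}\bar n_yv_y+r_s\bar n_xv_x & (r_s-1)\bar n_xv_y\\ (r_s-1)\bar n_yv_x & \bar n_xv_x+r_s\bar n_yv_y\end{pmatrix}.$$ *)

(* Defs.v *)
From Stdlib Require Import Reals Lra ClassicalEpsilon.
Open Scope R_scope.

Definition pt : Type := (R * R)%type.
Definition padd (P Q : pt) : pt := (fst P + fst Q, snd P + snd Q).
Definition psub (P Q : pt) : pt := (fst P - fst Q, snd P - snd Q).
Definition pscal (a : R) (P : pt) : pt := (a * fst P, a * snd P).
Definition dot (P Q : pt) : R := fst P * fst Q + snd P * snd Q.
Definition pnorm (P : pt) : R := sqrt (dot P P).
Definition vcomp (k : bool) (P : pt) : R := if k then fst P else snd P.

Definition ind (P : Prop) : R :=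
  if excluded_middle_informative P then 1 else 0.

(* Riemann integral of f over [a,b] (0 if f is not Riemann integrable) *)
Definition Rint (f : R -> R) (a b : R) : R :=
  match excluded_middle_informative (exists _ : Riemann_integrable f a b, True) with
  | left H => RiemannInt (proj1_sig (constructive_indefinite_description _ H))
  | right _ => 0
  end.

(* Rect: the Cartesian rectangle with corners (x0,y0), (x0+hx,y0+hy);
   Tri : the half of such a rectangle cut along a diagonal, with right-angle
         vertex (x0,y0) (signs of hx, hy give the four possible halves). *)
Inductive elem_kind := Tri | Rect.
Definition nedges (k : elem_kind) : nat := match k with Tri => 3%nat | Rect => 4%nat end.

Record elem := mkElem { ekind : elem_kind; ex0 : R; ey0 : R; ehx : R; ehy : R }.
Definition elem_ok (T : elem) : Prop := ehx T <> 0 /\ ehy T <> 0.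
Definition NE (T : elem) : nat := nedges (ekind T).

(* vertices A_0 .. A_{N-1} (indices taken mod N); edge b_i = [A_i, A_{i+1}] *)
Definition vertex (T : elem) (i : nat) : pt :=
  let x0 := ex0 T in let y0 := ey0 T in let hx := ehx T in let hy := ehy T in
  match ekind T with
  | Tri => match Nat.modulo i 3 with
           | 0%nat => (x0, y0) | 1%nat => (x0 + hx, y0) | _ => (x0, y0 + hy) end
  | Rect => match Nat.modulo i 4 with
           | 0%nat => (x0, y0) | 1%nat => (x0 + hx, y0)
           | 2%nat => (x0 + hx, y0 + hy) | _ => (x0, y0 + hy) end
  end.

Definition edge_pt (T : elem) (i : nat) (t : R) : pt :=
  padd (vertex T i) (pscal t (psub (vertex T (S i)) (vertex T i))).
Definition midpoint (T : elem) (i : nat) : pt := edge_pt T i (1/2).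
Definition edge_len (T : elem) (i : nat) : R := pnorm (psub (vertex T (S i)) (vertex T i)).
Definition on_edge (T : elem) (i : nat) (X : pt) : Prop :=
  exists t, 0 <= t <= 1 /\ X = edge_pt T i t.
Definition on_boundary (T : elem) (X : pt) : Prop :=
  exists i, (i < NE T)%nat /\ on_edge T i X.
Definition inT (T : elem) (X : pt) : Prop :=
  exists a b, 0 <= a <= 1 /\ 0 <= b <= 1 /\
    (ekind T = Tri -> a + b <= 1) /\
    X = (ex0 T + a * ehx T, ey0 T + b * ehy T).

(* p = pa + pb x + pc y + pd (x^2 - y^2); for Crouzeix-Raviart (Tri) pd = 0 *)
Record ppoly := mkPoly { pa : R; pb : R; pc : R; pd : R }.
Definition poly0 : ppoly := mkPoly 0 0 0 0.
Definition inPi (k : elem_kind) (p : ppoly) : Prop :=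
  match k with Tri => pd p = 0 | Rect => True end.
Definition peval (p : ppoly) (X : pt) : R :=
  pa p + pb p * fst X + pc p * snd X + pd p * (fst X ^ 2 - snd X ^ 2).
Definition pgrad (p : ppoly) (X : pt) : pt :=
  (pb p + 2 * pd p * fst X, pc p - 2 * pd p * snd X).
Definition pdxx (p : ppoly) : R := 2 * pd p.

(* D, E : the two points of Gamma cap dT; nbar : a unit normal of l = [D,E];
   sgn = +1/-1 : T^+ (and T_p^+) lie on the side {sgn * nbar.(X-D) > 0} of l;
   F, v : the point F and the vector v(F) of the jump condition (J2). *)
Record iface := mkIface { iD : pt; iE : pt; inbar : pt; isgn : R; iF : pt; iv : pt }.
Inductive variant := VCurve | VLine.

Definition on_l (I : iface) (X : pt) : Prop :=
  exists t, 0 <= t <= 1 /\ X = padd (iD I) (pscal t (psub (iE I) (iD I))).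

Definition iface_ok (T : elem) (var : variant) (I : iface) : Prop :=
  iD I <> iE I /\ on_boundary T (iD I) /\ on_boundary T (iE I) /\
  ~ (exists i, (i < NE T)%nat /\ on_edge T i (iD I) /\ on_edge T i (iE I)) /\
  pnorm (inbar I) = 1 /\ dot (inbar I) (psub (iE I) (iD I)) = 0 /\
  (isgn I = 1 \/ isgn I = -1) /\
  match var with
  | VCurve => inT T (iF I) /\ iF I <> iD I /\ iF I <> iE I /\
              pnorm (iv I) = 1 /\ dot (inbar I) (iv I) > 0
  | VLine => on_l I (iF I) /\ iv I = inbar I
  end.

Definition sside (I : iface) (s : bool) (X : pt) : R :=
  (if s then 1 else -1) * isgn I * dot (inbar I) (psub X (iD I)).

Definition in_Is (T : elem) (I : iface) (s : bool) (i : nat) : Prop :=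
  forall t, 0 <= t <= 1 -> sside I s (edge_pt T i t) >= 0.
Definition in_Iint (T : elem) (I : iface) (i : nat) : Prop :=
  (exists t, 0 <= t <= 1 /\ sside I true (edge_pt T i t) > 0) /\
  (exists t, 0 <= t <= 1 /\ sside I false (edge_pt T i t) > 0).

Definition pw_integrand (T : elem) (I : iface) (i : nat) (fp fm : pt -> R) (t : R) : R :=
  let P := edge_pt T i t in
  if Rlt_dec 0 (sside I true P) then fp P else fm P.
Definition pw_edge_int (T : elem) (I : iface) (i : nat) (fp fm : pt -> R) : R :=
  edge_len T i * Rint (pw_integrand T I i fp fm) 0 1.

Definition side_edge_int (T : elem) (I : iface) (s : bool) (i : nat) (g : pt -> R) : R :=
  edge_len T i *
  Rint (fun t => let P := edge_pt T i t in
                 if Rlt_dec 0 (sside I s P) then g P else 0) 0 1.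

(* IFE functions: pairs (p on T_p^+, m on T_p^-) with jump conditions J1, J2 *)
Definition IFE (k : elem_kind) (I : iface) (bp bm : R) (p m : ppoly) : Prop :=
  inPi k p /\ inPi k m /\
  (forall X, on_l I X -> peval m X = peval p X) /\
  (k = Rect -> pdxx m = pdxx p) /\
  bm * dot (pgrad m (iF I)) (iv I) = bp * dot (pgrad p (iF I)) (iv I).

Record mat2 := mkMat { m11 : R; m12 : R; m21 : R; m22 : R }.
Definition rs (bp bm : R) (s : bool) : R := if s then bp / bm else bm / bp.
Definition Mbar (bp bm : R) (s : bool) (nb v : pt) : mat2 :=
  let r := rs bp bm s in
  let c := / dot nb v in
  mkMat (c * (snd nb * snd v + r * fst nb * fst v)) (c * ((r - 1) * fst nb * snd v))
        (c * ((r - 1) * snd nb * fst v)) (c * (fst nb * fst v + r * snd nb * snd v)).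
Definition MTapply (M : mat2) (w : pt) : pt :=
  (m11 M * fst w + m21 M * snd w, m12 M * fst w + m22 M * snd w).
Definition MmITapply (M : mat2) (w : pt) : pt := psub (MTapply M w) w.

Definition Lambda_s (T : elem) (I : iface) (bp bm : R) (phi : nat -> ppoly * ppoly)
  (Xbar : nat -> pt) (s : bool) (X : pt) : pt :=
  let phis i := if s then fst (phi i) else snd (phi i) in
  let M := Mbar bp bm s (inbar I) (iv I) in
  let term i k :=
      vcomp k (psub (midpoint T i) X) * peval (phis i) X
    + ind (in_Is T I (negb s) i) *
        vcomp k (MmITapply M (psub (midpoint T i) (Xbar i))) * peval (phis i) X
    + ind (in_Iint T I i) *
        (/ edge_len T i *
         side_edge_int T I (negb s) i (fun P => vcomp k (MmITapply M (psub P (Xbar i)))))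
        * peval (phis i) X in
  (sum_f_R0 (fun i => term i true) (NE T - 1),
   sum_f_R0 (fun i => term i false) (NE T - 1)).

Definition LambdaP T I bp bm phi Xbar (X : pt) : pt :=
  Lambda_s T I bp bm phi Xbar true X.
Definition LambdaM T I bp bm phi Xbar (X : pt) : pt :=
  MTapply (Mbar bp bm true (inbar I) (iv I)) (Lambda_s T I bp bm phi Xbar false X).

(* Main.v *)
Require Import Defs.
From Stdlib Require Import Reals Lra Psatz Classical ClassicalEpsilon FunctionalExtensionality.
From Coquelicot Require Import Coquelicot.
Open Scope R_scope.

Lemma Rint_RInt f : ex_RInt f 0 1 -> Rint f 0 1 = RInt f 0 1.
Proof.
  intro H. unfold Rint. destruct excluded_middle_informative as [e|n].
  - rewrite (RInt_Reals f 0 1 (proj1_sig (constructive_indefinite_description _ e))). reflexivity.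
  - exfalso. apply n. exists (ex_RInt_Reals_0 _ _ _ H). exact I.
Qed.

Lemma ex_RInt_lin f g c : ex_RInt f 0 1 -> ex_RInt g 0 1 -> ex_RInt (fun t => f t + c * g t) 0 1.
Proof.
  intros Hf Hg.
  apply (ex_RInt_plus f (fun t => scal c (g t))); auto. apply ex_RInt_scal; auto.
Qed.

Lemma RInt_lin f g c : ex_RInt f 0 1 -> ex_RInt g 0 1 ->
  RInt (fun t => f t + c * g t) 0 1 = RInt f 0 1 + c * RInt g 0 1.
Proof.
  intros Hf Hg.
  rewrite (RInt_plus f (fun t => scal c (g t))); auto. 2: apply ex_RInt_scal; auto.
  exact (f_equal (fun z => RInt f 0 1 + z) (RInt_scal g 0 1 c Hg)).
Qed.

Lemma RInt_affine a b : RInt (fun t => a + b * t) 0 1 = a + b / 2.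
Proof.
  apply is_RInt_unique.
  replace (a + b/2) with (minus ((fun t => a * t + b * t^2/2) 1) ((fun t => a * t + b * t^2/2) 0)).
  2:{ unfold minus, plus, opp; simpl. field. }
  apply (is_RInt_derive (fun t => a * t + b * t^2/2) (fun t => a + b * t)).
  - intros x _. auto_derive; auto. field.
  - intros x _. apply (@ex_derive_continuous R_AbsRing R_NormedModule). auto_derive; auto.
Qed.

Lemma cont_ifpos (tau : R -> R) c x : continuous tau x ->
  continuous (fun t => c * ((tau t + Rabs (tau t)) / 2)) x.
Proof.
  intro H.
  apply (continuous_mult (fun _ => c) (fun t => ((tau t + Rabs (tau t)) / 2))).
  apply continuous_const.
  apply (continuous_mult (fun t => (tau t + Rabs (tau t))) (fun _ => /2)).
  2: apply continuous_const.
  apply (continuous_plus tau (fun t => Rabs (tau t))); auto.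
  apply continuous_Rabs_comp; auto.
Qed.

Lemma ifpos_eq (tau : R -> R) c t :
  (if Rlt_dec 0 (tau t) then c * tau t else 0) = c * ((tau t + Rabs (tau t)) / 2).
Proof.
  destruct Rlt_dec.
  - rewrite Rabs_right by lra. field.
  - rewrite Rabs_left1 by lra. field.
Qed.

Lemma ex_RInt_pw (Q tau : R -> R) c :
  (forall x, continuous Q x) -> (forall x, continuous tau x) ->
  ex_RInt (fun t => Q t + (if Rlt_dec 0 (tau t) then c * tau t else 0)) 0 1.
Proof.
  intros HQ Ht.
  apply (ex_RInt_ext (fun t => Q t + 1 * (c * ((tau t + Rabs (tau t)) / 2)))).
  { intros x _. cbv beta. rewrite (ifpos_eq tau c x). rewrite Rmult_1_l; reflexivity. }
  apply ex_RInt_lin; apply (@ex_RInt_continuous R_CompleteNormedModule); intros; auto. apply cont_ifpos; auto.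
Qed.

Lemma cont_peval m A V x : continuous (fun t => peval m (padd A (pscal t V))) x.
Proof.
  apply (@ex_derive_continuous R_AbsRing R_NormedModule). unfold peval, padd, pscal; simpl. auto_derive; auto.
Qed.

Lemma cont_sside I s A V x : continuous (fun t => sside I s (padd A (pscal t V))) x.
Proof.
  apply (@ex_derive_continuous R_AbsRing R_NormedModule). unfold sside, dot, psub, padd, pscal; simpl. auto_derive; auto.
Qed.

Definition geo_ok (I : iface) : Prop :=
  iD I <> iE I /\ dot (inbar I) (inbar I) = 1 /\ dot (inbar I) (psub (iE I) (iD I)) = 0 /\
  isgn I * isgn I = 1 /\ dot (inbar I) (iv I) <> 0.

Lemma iface_geo T var I : iface_ok T var I -> geo_ok I.
Proof.
  intros (H1 & _ & _ & _ & Hn & Hd & Hs & Hv).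
  assert (Hnn : dot (inbar I) (inbar I) = 1).
  { unfold pnorm in Hn. assert (0 <= dot (inbar I) (inbar I)).
    { unfold dot. nra. }
    rewrite <- (sqrt_sqrt (dot (inbar I) (inbar I))) by auto. rewrite Hn. ring. }
  split; [auto|split; [auto|split; [auto|split]]].
  - destruct Hs as [-> | ->]; ring.
  - destruct var.
    + destruct Hv as (_ & _ & _ & _ & Hp). lra.
    + destruct Hv as (_ & ->). lra.
Qed.

Lemma line_gen (n D E g P : pt) (sg : R) : D <> E -> dot n n = 1 -> dot n (psub E D) = 0 ->
  sg * sg = 1 -> dot g (psub E D) = 0 ->
  dot g (psub P D) = (dot g n * sg) * ((1 * sg) * dot n (psub P D)).
Proof.
  destruct n as [nx ny], D as [dx dy], E as [ex ey], g as [gx gy], P as [px py].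
  unfold dot, psub; simpl. intros HDE Hn Hnd Hs Hgd.
  assert (Hk1 : (gx * ny - gy * nx) * (ex - dx) = 0) by (transitivity (ny * (gx*(ex-dx)+gy*(ey-dy)) - gy*(nx*(ex-dx)+ny*(ey-dy))); [ring| rewrite Hgd, Hnd; ring]).
  assert (Hk2 : (gx * ny - gy * nx) * (ey - dy) = 0) by (transitivity (gx*(nx*(ex-dx)+ny*(ey-dy)) - nx * (gx*(ex-dx)+gy*(ey-dy))); [ring| rewrite Hgd, Hnd; ring]).
  assert (Hk : gx * ny - gy * nx = 0).
  { destruct (Req_dec (ex - dx) 0) as [h1|h1].
    - destruct (Req_dec (ey - dy) 0) as [h2|h2].
      + exfalso; apply HDE; f_equal; lra.
      + apply Rmult_integral in Hk2; destruct Hk2; auto; lra.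
    - apply Rmult_integral in Hk1; destruct Hk1; auto; lra. }
  transitivity ((gx * nx + gy * ny) * (nx * (px - dx) + ny * (py - dy)) * (sg * sg)).
  2: ring.
  rewrite Hs.
  assert (E0 : (gx * (px - dx) + gy * (py - dy)) * (nx * nx + ny * ny)
    - (gx * nx + gy * ny) * (nx * (px - dx) + ny * (py - dy))
    = (gx * ny - gy * nx) * ((px - dx) * ny - (py - dy) * nx)) by ring.
  rewrite Hk, Hn in E0. lra.
Qed.

Lemma line_sside I g : geo_ok I -> dot g (psub (iE I) (iD I)) = 0 ->
  forall P, dot g (psub P (iD I)) = (dot g (inbar I) * isgn I) * sside I true P.
Proof.
  intros (H1 & H2 & H3 & H4 & _) Hg P. unfold sside. simpl.
  apply (line_gen _ _ (iE I)); auto.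
Qed.

Lemma sside_false I P : sside I false P = - sside I true P.
Proof. unfold sside; simpl; ring. Qed.

Lemma on_l_D I : on_l I (iD I).
Proof. exists 0. split; [lra|]. destruct (iD I), (iE I); unfold padd, pscal, psub; simpl; f_equal; ring. Qed.
Lemma on_l_E I : on_l I (iE I).
Proof. exists 1. split; [lra|]. destruct (iD I), (iE I); unfold padd, pscal, psub; simpl; f_equal; ring. Qed.

Lemma pd_eq k I bp bm p m : IFE k I bp bm p m -> pd p = pd m.
Proof.
  intros (Hp & Hm & _ & Hr & _). destruct k; simpl in *.
  - lra.
  - unfold pdxx in Hr. specialize (Hr eq_refl). lra.
Qed.

Lemma IFE_diff k I bp bm p m : geo_ok I -> IFE k I bp bm p m ->
  exists kap, forall P, peval p P = peval m P + kap * sside I true P.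
Proof.
  intros Hg HI. pose proof (pd_eq _ _ _ _ _ _ HI) as Hpd.
  destruct HI as (_ & _ & HJ & _ & _).
  set (g := (pb p - pb m, pc p - pc m)).
  assert (Hh : forall P, peval p P - peval m P = (pa p - pa m) + dot g P).
  { intro P. unfold peval, dot, g; simpl. rewrite Hpd. ring. }
  assert (HD := HJ _ (on_l_D I)). assert (HE := HJ _ (on_l_E I)).
  assert (Hgd : dot g (psub (iE I) (iD I)) = 0).
  { assert (dot g (psub (iE I) (iD I)) = dot g (iE I) - dot g (iD I)) as ->
      by (unfold dot, psub; simpl; ring).
    pose proof (Hh (iE I)); pose proof (Hh (iD I)). lra. }
  exists (dot g (inbar I) * isgn I). intro P.
  rewrite <- (line_sside I g Hg Hgd P).
  assert (dot g (psub P (iD I)) = dot g P - dot g (iD I)) as -> by (unfold dot, psub; simpl; ring).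
  pose proof (Hh P); pose proof (Hh (iD I)). lra.
Qed.

Definition pcomb (p q : ppoly) (c : R) : ppoly :=
  mkPoly (pa p + c * pa q) (pb p + c * pb q) (pc p + c * pc q) (pd p + c * pd q).

Lemma peval_comb p q c X : peval (pcomb p q c) X = peval p X + c * peval q X.
Proof. unfold peval, pcomb; simpl; ring. Qed.

Lemma dot_pgrad_comb p q c F v :
  dot (pgrad (pcomb p q c) F) v = dot (pgrad p F) v + c * dot (pgrad q F) v.
Proof. unfold dot, pgrad, pcomb; simpl; ring. Qed.

Lemma IFE_comb k I bp bm p m q m' c :
  IFE k I bp bm p m -> IFE k I bp bm q m' -> IFE k I bp bm (pcomb p q c) (pcomb m m' c).
Proof.
  intros (H1 & H2 & H3 & H4 & H5) (G1 & G2 & G3 & G4 & G5).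
  split; [|split; [|split; [|split]]].
  - destruct k; simpl in *; auto. rewrite H1, G1; ring.
  - destruct k; simpl in *; auto. rewrite H2, G2; ring.
  - intros X HX. rewrite !peval_comb, H3, G3; auto.
  - intro Hk. unfold pdxx in *; simpl. specialize (H4 Hk); specialize (G4 Hk). assert (E1 : pd m = pd p) by lra. assert (E2 : pd m' = pd q) by lra. rewrite E1, E2; ring.
  - rewrite !dot_pgrad_comb.
    transitivity (bm * dot (pgrad m (iF I)) (iv I) + c * (bm * dot (pgrad m' (iF I)) (iv I))); [ring|].
    rewrite H5, G5; ring.
Qed.

Lemma pw_comb T I j p m q m' c :
  pw_integrand T I j (peval (pcomb p q c)) (peval (pcomb m m' c)) =
  fun t => pw_integrand T I j (peval p) (peval m) t + c * pw_integrand T I j (peval q) (peval m') t.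
Proof.
  apply functional_extensionality; intro t. unfold pw_integrand.
  destruct Rlt_dec; apply peval_comb.
Qed.

Lemma IFE_int T k I bp bm p m j : geo_ok I -> IFE k I bp bm p m ->
  ex_RInt (pw_integrand T I j (peval p) (peval m)) 0 1.
Proof.
  intros Hg HI. destruct (IFE_diff _ _ _ _ _ _ Hg HI) as [kap Hk].
  apply (ex_RInt_ext (fun t => peval m (edge_pt T j t) +
     (if Rlt_dec 0 (sside I true (edge_pt T j t)) then kap * sside I true (edge_pt T j t) else 0))).
  { intros x _. unfold pw_integrand. cbv zeta. destruct Rlt_dec.
    - rewrite Hk. reflexivity.
    - rewrite Rplus_0_r. reflexivity. }
  apply (ex_RInt_pw (fun t => peval m (edge_pt T j t)) (fun t => sside I true (edge_pt T j t))).
  - intro x. unfold edge_pt. apply cont_peval.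
  - intro x. unfold edge_pt. apply cont_sside.
Qed.

Lemma pwint_comb T k I bp bm p m q m' c j : geo_ok I ->
  IFE k I bp bm p m -> IFE k I bp bm q m' ->
  pw_edge_int T I j (peval (pcomb p q c)) (peval (pcomb m m' c)) =
  pw_edge_int T I j (peval p) (peval m) + c * pw_edge_int T I j (peval q) (peval m').
Proof.
  intros Hg H1 H2. unfold pw_edge_int. rewrite pw_comb.
  pose proof (IFE_int T _ _ _ _ _ _ j Hg H1) as E1.
  pose proof (IFE_int T _ _ _ _ _ _ j Hg H2) as E2.
  rewrite (Rint_RInt _ (ex_RInt_lin _ _ c E1 E2)), (Rint_RInt _ E1), (Rint_RInt _ E2).
  rewrite RInt_lin; auto. ring.
Qed.

Fixpoint Gsum (W : ppoly) (ph : nat -> ppoly) (c : nat -> R) (n : nat) : ppoly :=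
  match n with
  | O => pcomb W (ph O) (- c O)
  | S n' => pcomb (Gsum W ph c n') (ph (S n')) (- c (S n'))
  end.

Lemma peval_Gsum W ph c n X :
  peval (Gsum W ph c n) X = peval W X - sum_f_R0 (fun i => c i * peval (ph i) X) n.
Proof. induction n; simpl; rewrite peval_comb; try rewrite IHn; ring. Qed.

Lemma Gsum_prop T k I bp bm Wp Wm ph1 ph2 c n : geo_ok I ->
  IFE k I bp bm Wp Wm -> (forall i, (i <= n)%nat -> IFE k I bp bm (ph1 i) (ph2 i)) ->
  IFE k I bp bm (Gsum Wp ph1 c n) (Gsum Wm ph2 c n) /\
  forall j, pw_edge_int T I j (peval (Gsum Wp ph1 c n)) (peval (Gsum Wm ph2 c n)) =
    pw_edge_int T I j (peval Wp) (peval Wm) -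
    sum_f_R0 (fun i => c i * pw_edge_int T I j (peval (ph1 i)) (peval (ph2 i))) n.
Proof.
  intros Hg HW Hph. induction n as [|n IH].
  - simpl. split.
    + apply IFE_comb; auto.
    + intro j. rewrite (pwint_comb T k I bp bm); auto. ring.
  - destruct IH as [IH1 IH2]; [intros; apply Hph; lia|]. simpl. split.
    + apply IFE_comb; auto.
    + intro j. rewrite (pwint_comb T k I bp bm); auto. rewrite IH2. ring.
Qed.

Lemma sum_kron (c : nat -> R) L j n :
  sum_f_R0 (fun i => c i * (L * (if Nat.eq_dec i j then 1 else 0))) n =
  if Compare_dec.le_dec j n then L * c j else 0.
Proof.
  induction n; cbn [sum_f_R0].
  - destruct (Nat.eq_dec 0 j); destruct (Compare_dec.le_dec j 0); subst; try lia; ring.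
  - rewrite IHn. destruct (Nat.eq_dec (S n) j); destruct (Compare_dec.le_dec j n); destruct (Compare_dec.le_dec j (S n));
      subst; try lia; ring.
Qed.

Definition acol (M : mat2) (k : bool) : pt :=
  if k then (m11 M - 1, m21 M) else (m12 M, m22 M - 1).

Lemma vcomp_MmIT M k w : vcomp k (MmITapply M w) = dot (acol M k) w.
Proof. destruct k; unfold MmITapply, MTapply, acol, dot, psub, vcomp; simpl; ring. Qed.

Lemma acol_dot bp bm s n v k w : dot (acol (Mbar bp bm s n v) k) w =
  / dot n v * (rs bp bm s - 1) * vcomp k v * dot n w + (/ dot n v * dot n v - 1) * vcomp k w.
Proof. destruct k; unfold acol, Mbar, dot, vcomp; simpl; ring. Qed.

Lemma acol_d I bp bm s k : geo_ok I ->
  dot (acol (Mbar bp bm s (inbar I) (iv I)) k) (psub (iE I) (iD I)) = 0.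
Proof.
  intros (_ & _ & Hd & _ & Hv). rewrite acol_dot, Hd, Rinv_l by auto. ring.
Qed.

Lemma dot_lin g A V t D : dot g (psub (padd A (pscal t V)) D) = dot g (psub A D) + dot g V * t.
Proof. unfold dot, psub, padd, pscal; simpl; ring. Qed.

Definition Bp (X : pt) (k : bool) : ppoly :=
  mkPoly (- vcomp k X) (if k then 1 else 0) (if k then 0 else 1) 0.
Definition Dp (a D : pt) : ppoly := mkPoly (- dot a D) (fst a) (snd a) 0.
Definition Wp (s : bool) X k a D := if s then Bp X k else pcomb (Bp X k) (Dp a D) 1.
Definition Wm (s : bool) X k a D := if s then pcomb (Bp X k) (Dp a D) 1 else Bp X k.

Lemma peval_Bp X k P : peval (Bp X k) P = vcomp k (psub P X).
Proof. destruct k; unfold peval, Bp, vcomp, psub; simpl; ring. Qed.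
Lemma peval_Dp a D P : peval (Dp a D) P = dot a (psub P D).
Proof. unfold peval, Dp, dot, psub; simpl; ring. Qed.
Lemma grad_Bp X k F v : dot (pgrad (Bp X k) F) v = vcomp k v.
Proof. destruct k; unfold pgrad, Bp, dot, vcomp; simpl; ring. Qed.
Lemma grad_Dp a D F v : dot (pgrad (Dp a D) F) v = dot a v.
Proof. unfold pgrad, Dp, dot; simpl; ring. Qed.

Lemma W_IFE kd I bp bm s X k : geo_ok I -> 0 < bp -> 0 < bm ->
  let a := acol (Mbar bp bm s (inbar I) (iv I)) k in
  IFE kd I bp bm (Wp s X k a (iD I)) (Wm s X k a (iD I)).
Proof.
  intros Hg Hbp Hbm a.
  assert (Ha : dot a (psub (iE I) (iD I)) = 0) by apply (acol_d I bp bm s k Hg).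
  assert (Hl : forall P, on_l I P -> dot a (psub P (iD I)) = 0).
  { intros P [t [_ ->]]. rewrite dot_lin, Ha.
    unfold dot, psub; simpl; ring. }
  destruct Hg as (_ & _ & _ & _ & Hv).
  split; [|split; [|split; [|split]]].
  - destruct kd, s; simpl; auto; ring.
  - destruct kd, s; simpl; auto; ring.
  - intros P HP. destruct s; unfold Wp, Wm; rewrite peval_comb, peval_Dp, Hl; auto; ring.
  - intros _. destruct s; unfold Wp, Wm, pdxx; simpl; ring.
  - destruct s; unfold Wp, Wm; rewrite ?dot_pgrad_comb, grad_Bp, grad_Dp; unfold a;
      rewrite acol_dot, Rinv_l by auto; unfold rs; field; lra.
Qed.

Lemma ind_T (P : Prop) : P -> Defs.ind P = 1.
Proof. intro H. unfold Defs.ind. destruct excluded_middle_informative; tauto. Qed.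
Lemma ind_F (P : Prop) : ~ P -> Defs.ind P = 0.
Proof. intro H. unfold Defs.ind. destruct excluded_middle_informative; tauto. Qed.

Lemma RInt_zero : RInt (fun _ => 0) 0 1 = 0.
Proof. rewrite RInt_const. unfold scal; simpl. unfold mult; simpl. ring. Qed.

Definition mean T I bp bm (Xbar : nat -> pt) s k X i :=
  vcomp k (psub (midpoint T i) X)
  + Defs.ind (in_Is T I (negb s) i) *
      vcomp k (MmITapply (Mbar bp bm s (inbar I) (iv I)) (psub (midpoint T i) (Xbar i)))
  + Defs.ind (in_Iint T I i) *
      (/ edge_len T i * side_edge_int T I (negb s) i
          (fun P => vcomp k (MmITapply (Mbar bp bm s (inbar I) (iv I)) (psub P (Xbar i))))).

Lemma Lambda_mean T I bp bm phi Xbar s k X :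
  vcomp k (Lambda_s T I bp bm phi Xbar s X) =
  sum_f_R0 (fun i => mean T I bp bm Xbar s k X i *
     peval (if s then fst (phi i) else snd (phi i)) X) (NE T - 1).
Proof.
  unfold Lambda_s. cbv zeta. destruct k; cbn [vcomp]; apply sum_eq; intros i _;
    unfold mean; cbn [vcomp]; ring.
Qed.

Lemma W_mean T I bp bm Xbar s k X j : geo_ok I -> on_l I (Xbar j) -> edge_len T j <> 0 ->
  let a := acol (Mbar bp bm s (inbar I) (iv I)) k in
  pw_edge_int T I j (peval (Wp s X k a (iD I))) (peval (Wm s X k a (iD I))) =
  edge_len T j * mean T I bp bm Xbar s k X j.
Proof.
  intros Hgeo HX HL a. unfold mean.
  set (M := Mbar bp bm s (inbar I) (iv I)) in *.
  assert (Ha : dot a (psub (iE I) (iD I)) = 0) by apply (acol_d I bp bm s k Hgeo).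
  set (kap := dot a (inbar I) * isgn I).
  assert (HaS : forall P, dot a (psub P (iD I)) = kap * sside I true P)
    by (apply line_sside; auto).
  assert (Hg : forall P, vcomp k (MmITapply M (psub P (Xbar j))) = dot a (psub P (iD I))).
  { intro P. destruct HX as [t [_ ->]]. rewrite vcomp_MmIT. fold a.
    transitivity (dot a (psub P (iD I)) - t * dot a (psub (iE I) (iD I))).
    - unfold dot, psub, padd, pscal; simpl; ring.
    - rewrite Ha; ring. }
  set (SIf := fun t => if Rlt_dec 0 (sside I (negb s) (edge_pt T j t))
                       then vcomp k (MmITapply M (psub (edge_pt T j t) (Xbar j))) else 0).
  set (Bf := fun t => peval (Bp X k) (edge_pt T j t)).
  assert (Hpw : pw_integrand T I j (peval (Wp s X k a (iD I))) (peval (Wm s X k a (iD I)))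
                = fun t => Bf t + 1 * SIf t).
  { apply functional_extensionality; intro t. unfold pw_integrand, SIf, Bf. cbv zeta.
    rewrite Hg, HaS. set (sg := sside I true (edge_pt T j t)).
    destruct s; simpl negb; rewrite ?sside_false; fold sg; unfold Wp, Wm;
      rewrite ?peval_comb, ?peval_Dp, ?HaS; fold sg;
      destruct (Rlt_dec 0 sg); destruct (Rlt_dec 0 (- sg)); try lra; try ring;
      assert (Hz : sg = 0) by lra; rewrite Hz; ring. }
  assert (HexB : ex_RInt Bf 0 1).
  { apply (@ex_RInt_continuous R_CompleteNormedModule). intros. unfold Bf, edge_pt. apply cont_peval. }
  assert (HexS : ex_RInt SIf 0 1).
  { apply (ex_RInt_ext (fun t => (fun _ => 0) t +
       (if Rlt_dec 0 (sside I (negb s) (edge_pt T j t))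
        then (if s then - kap else kap) * sside I (negb s) (edge_pt T j t) else 0))).
    - intros x _. unfold SIf. cbv beta. destruct Rlt_dec.
      + rewrite Hg, HaS. destruct s; simpl negb; rewrite ?sside_false; simpl; ring.
      + rewrite Rplus_0_l. reflexivity.
    - apply ex_RInt_pw.
      + intro; apply continuous_const.
      + intro x. unfold edge_pt. apply cont_sside. }
  assert (HS : side_edge_int T I (negb s) j (fun P => vcomp k (MmITapply M (psub P (Xbar j))))
               = edge_len T j * RInt SIf 0 1).
  { unfold side_edge_int. rewrite <- (Rint_RInt SIf HexS). reflexivity. }
  assert (HB : RInt Bf 0 1 = vcomp k (psub (midpoint T j) X)).
  { rewrite (RInt_ext Bf (fun t => (vcomp k (vertex T j) - vcomp k X) +
               vcomp k (psub (vertex T (S j)) (vertex T j)) * t)).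
    - rewrite RInt_affine. unfold midpoint, edge_pt.
      destruct k; unfold vcomp, psub, padd, pscal; simpl; field.
    - intros x _. unfold Bf. rewrite peval_Bp. unfold edge_pt.
      destruct k; unfold vcomp, psub, padd, pscal; simpl; ring. }
  unfold pw_edge_int. rewrite Hpw. rewrite (Rint_RInt _ (ex_RInt_lin _ _ 1 HexB HexS)).
  rewrite RInt_lin by auto. rewrite HB, HS.
  destruct (classic (in_Is T I (negb s) j)) as [HIs|HIs];
  destruct (classic (in_Iint T I j)) as [HIi|HIi].
  - exfalso. destruct HIi as [[t1 [Ht1 H1]] [t2 [Ht2 H2]]].
    destruct s; simpl in HIs; [specialize (HIs t1 Ht1) | specialize (HIs t2 Ht2)];
      rewrite ?sside_false in *; lra.
  - rewrite (ind_T _ HIs), (ind_F _ HIi).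
    rewrite (RInt_ext SIf (fun t => dot a (psub (vertex T j) (iD I)) +
               dot a (psub (vertex T (S j)) (vertex T j)) * t)).
    + rewrite RInt_affine. rewrite Hg. unfold midpoint, edge_pt. rewrite dot_lin. field; auto.
    + intros x Hx. rewrite Rmin_left, Rmax_right in Hx by lra.
      assert (Hxs := HIs x ltac:(lra)).
      unfold SIf. rewrite Hg, <- dot_lin. fold (edge_pt T j x). destruct Rlt_dec; [reflexivity|].
      rewrite HaS. destruct s; simpl negb in *; rewrite ?sside_false in *;
      assert (Hz : sside I true (edge_pt T j x) = 0) by lra; rewrite Hz, Rmult_0_r; reflexivity.
  - rewrite (ind_F _ HIs), (ind_T _ HIi). field. auto.
  - rewrite (ind_F _ HIs), (ind_F _ HIi).
    rewrite (RInt_ext SIf (fun _ => 0)).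
    + rewrite RInt_zero. ring.
    + intros x Hx. rewrite Rmin_left, Rmax_right in Hx by lra.
      unfold SIf. destruct Rlt_dec as [h|h]; [exfalso|reflexivity].
      apply HIs. intros t Ht. apply Rnot_lt_ge. intro ht.
      apply HIi. destruct s; simpl negb in *; rewrite ?sside_false in *; split.
      * exists t; split; auto; lra.
      * exists x; split; [lra|]. rewrite sside_false; lra.
      * exists x; split; [lra|]. lra.
      * exists t; split; auto. rewrite sside_false; lra.
Qed.

Lemma Lambda_zero (T : elem) (var : variant) (I : iface) (bp bm : R)
  (phi : nat -> ppoly * ppoly) (Xbar : nat -> pt) :
  iface_ok T var I -> 0 < bp -> 0 < bm ->
  (forall i, (i < NE T)%nat -> IFE (ekind T) I bp bm (fst (phi i)) (snd (phi i))) ->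
  (forall i j, (i < NE T)%nat -> (j < NE T)%nat ->
     / edge_len T j * pw_edge_int T I j (peval (fst (phi i))) (peval (snd (phi i)))
     = if Nat.eq_dec i j then 1 else 0) ->
  (forall p m, IFE (ekind T) I bp bm p m ->
     (forall j, (j < NE T)%nat -> pw_edge_int T I j (peval p) (peval m) = 0) ->
     p = poly0 /\ m = poly0) ->
  (forall i, (i < NE T)%nat -> on_l I (Xbar i)) ->
  forall s k X, vcomp k (Lambda_s T I bp bm phi Xbar s X) = 0.
Proof.
  intros Hok Hbp Hbm HIFE Hdel Huni HXb s k X.
  pose proof (iface_geo _ _ _ Hok) as Hgeo.
  assert (HN : (3 <= NE T)%nat) by (unfold NE; destruct (ekind T); simpl; lia).
  assert (HL : forall j, (j < NE T)%nat -> edge_len T j <> 0).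
  { intros j Hj HL0. specialize (Hdel j j Hj Hj).
    destruct (Nat.eq_dec j j) as [_|n]; [|lia].
    unfold pw_edge_int in Hdel. rewrite HL0 in Hdel. rewrite Rmult_0_l, Rmult_0_r in Hdel. lra. }
  assert (Hph : forall i j, (i < NE T)%nat -> (j < NE T)%nat ->
     pw_edge_int T I j (peval (fst (phi i))) (peval (snd (phi i))) =
     edge_len T j * (if Nat.eq_dec i j then 1 else 0)).
  { intros i j Hi Hj. rewrite <- (Hdel i j Hi Hj). field. auto. }
  set (a := acol (Mbar bp bm s (inbar I) (iv I)) k).
  set (c := mean T I bp bm Xbar s k X).
  destruct (Gsum_prop T (ekind T) I bp bm (Wp s X k a (iD I)) (Wm s X k a (iD I))
      (fun i => fst (phi i)) (fun i => snd (phi i)) c (NE T - 1) Hgeo)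
    as [HG HGint].
  { apply W_IFE; auto. }
  { intros i Hi. apply HIFE. lia. }
  destruct (Huni _ _ HG) as [Hp0 Hm0].
  { intros j Hj. rewrite HGint. unfold a. rewrite (W_mean T I bp bm Xbar s k X j Hgeo (HXb j Hj) (HL j Hj)).
    rewrite (sum_eq _ (fun i => c i * (edge_len T j * (if Nat.eq_dec i j then 1 else 0)))).
    - rewrite sum_kron. destruct (Compare_dec.le_dec j (NE T - 1)); [|lia]. unfold c. ring.
    - intros i Hi. rewrite Hph; auto. lia. }
  rewrite Lambda_mean. fold c.
  destruct s.
  - pose proof (peval_Gsum (Wp true X k a (iD I)) (fun i => fst (phi i)) c (NE T - 1) X) as E.
    rewrite Hp0 in E. unfold Wp in E. rewrite peval_Bp in E.
    assert (E2 : peval poly0 X = 0) by (unfold peval, poly0; simpl; ring).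
    assert (E3 : vcomp k (psub X X) = 0) by (destruct k; unfold vcomp, psub; simpl; ring).
    rewrite E2, E3 in E. lra.
  - pose proof (peval_Gsum (Wm false X k a (iD I)) (fun i => snd (phi i)) c (NE T - 1) X) as E.
    rewrite Hm0 in E. unfold Wm in E. rewrite peval_Bp in E.
    assert (E2 : peval poly0 X = 0) by (unfold peval, poly0; simpl; ring).
    assert (E3 : vcomp k (psub X X) = 0) by (destruct k; unfold vcomp, psub; simpl; ring).
    rewrite E2, E3 in E. lra.
Qed.

Theorem mainTheorem9 (T : elem) (var : variant) (I : iface) (bp bm : R)
  (phi : nat -> ppoly * ppoly) (Xbar : nat -> pt) :
  elem_ok T -> iface_ok T var I -> 0 < bp -> 0 < bm ->
  (forall i, (i < NE T)%nat -> IFE (ekind T) I bp bm (fst (phi i)) (snd (phi i))) ->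
  (forall i j, (i < NE T)%nat -> (j < NE T)%nat ->
     / edge_len T j * pw_edge_int T I j (peval (fst (phi i))) (peval (snd (phi i)))
     = if Nat.eq_dec i j then 1 else 0) ->
  (forall p m, IFE (ekind T) I bp bm p m ->
     (forall j, (j < NE T)%nat -> pw_edge_int T I j (peval p) (peval m) = 0) ->
     p = poly0 /\ m = poly0) ->
  (forall i, (i < NE T)%nat -> on_l I (Xbar i)) ->
  forall k : bool,
    (exists p m, IFE (ekind T) I bp bm p m /\
       (forall X, vcomp k (LambdaP T I bp bm phi Xbar X) = peval p X) /\
       (forall X, vcomp k (LambdaM T I bp bm phi Xbar X) = peval m X)) /\
    (forall j, (j < NE T)%nat ->
       exists pr : Riemann_integrable
         (pw_integrand T I j (fun P => vcomp k (LambdaP T I bp bm phi Xbar P))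
                             (fun P => vcomp k (LambdaM T I bp bm phi Xbar P))) 0 1,
         RiemannInt pr = 0).
Proof.
  intros _ Hok Hbp Hbm HIFE Hdel Huni HXb k.
  pose proof (Lambda_zero T var I bp bm phi Xbar Hok Hbp Hbm HIFE Hdel Huni HXb) as HZ.
  assert (HP : forall X, vcomp k (LambdaP T I bp bm phi Xbar X) = 0).
  { intro X. unfold LambdaP. apply HZ. }
  assert (HM : forall X, vcomp k (LambdaM T I bp bm phi Xbar X) = 0).
  { intro X. unfold LambdaM.
    pose proof (HZ false true X) as H1. pose proof (HZ false false X) as H2.
    destruct (Lambda_s T I bp bm phi Xbar false X) as [u w]. simpl in H1, H2. subst.
    destruct k; unfold MTapply, vcomp; simpl; ring. }
  split.
  - exists poly0, poly0. split; [|split].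
    + split; [|split; [|split; [|split]]].
      * destruct (ekind T); simpl; auto.
      * destruct (ekind T); simpl; auto.
      * intros; reflexivity.
      * intros; reflexivity.
      * unfold dot, pgrad, poly0; simpl; ring.
    + intro X. rewrite HP. unfold peval, poly0; simpl; ring.
    + intro X. rewrite HM. unfold peval, poly0; simpl; ring.
  - intros j Hj.
    assert (Hf : pw_integrand T I j (fun P => vcomp k (LambdaP T I bp bm phi Xbar P))
                             (fun P => vcomp k (LambdaM T I bp bm phi Xbar P)) = fun _ => 0).
    { apply functional_extensionality; intro t. unfold pw_integrand. cbv zeta.
      destruct Rlt_dec; [apply HP | apply HM]. }
    rewrite Hf.
    assert (Hex : ex_RInt (fun _ : R => 0) 0 1) by apply ex_RInt_const.
    exists (ex_RInt_Reals_0 _ _ _ Hex). rewrite <- RInt_Reals. apply RInt_zero.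
Qed.
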